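(* Let $\mathcal{G}=(G,\odot,\leq)$ be a real continuous Alo-group with $G$ an open interval of $\mathbb{R}$ and identity $e$, and let $\tilde A$ be an $n\times n$ $[\mathcal{G}]$-reciprocal IPCM with $n\geq 3$. Then $I_{[\mathcal{G}]}(\tilde A)\geq e$, and $I_{[\mathcal{G}]}(\tilde A)=e$ if and only if $\tilde A$ is $[\mathcal{G}]$-consistent.
   Context: An Alo-group $(G,\odot,\leq)$ is an Abelian group with a weak order $\leq$ such that $a\leq b\Rightarrow a\odot c\leq b\odot c$; real means $G\subseteq\mathbb{R}$ with usual order, continuous means $\odot$ is continuous. $a\div b=a\odot b^{(-1)}$, $\|a\|_{\mathcal{G}}=\max\{a,a^{(-1)}\}$, $d_{\mathcal{G}}(a,b)=\|a\div b\|_{\mathcal{G}}$. For $m\in\mathbb{N}$, $a^{(m)}$ is the $m$-fold $\odot$-product of $a$, and $a^{(1/m)}$ is the unique $x\in G$ with $x^{(m)}=a$. $[G]=\{[a^-,a^+]: a^-,a^+\in G,\ a^-\leq a^+\}$; $\tilde a^{(-1)}=[(a^+)^{(-1)},(a^-)^{(-1)}]$; $\tilde a\odot_{[G]}\tilde b=\{a\odot b: a\in\tilde a,b\in\tilde b\}$; $d_{[\mathcal{G}]}(\tilde a,\tilde b)=\max\{d_{\mathcal{G}}(a^-,b^-),d_{\mathcal{G}}(a^+,b^+)\}$. An IPCM $\tilde A=([a^-_{ij},a^+_{ij}])$ is an $n\times n$ matrix with entries in $[G]$; $[\mathcal{G}]$-reciprocal means $\tilde a_{ji}=\tilde a_{ij}^{(-1)}$;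 $[\mathcal{G}]$-consistent means $\tilde a_{ij}\odot_{[G]}\tilde a_{jk}\odot_{[G]}\tilde a_{ki}=\tilde a_{ik}\odot_{[G]}\tilde a_{kj}\odot_{[G]}\tilde a_{ji}$ for all $i,j,k$. Let $\tilde a_{ijk}=[a^-_{ij}\odot a^-_{jk}\odot a^-_{ki},\ a^+_{ij}\odot a^+_{jk}\odot a^+_{ki}]$ and $\tilde a_{ikj}=[a^-_{ik}\odot a^-_{kj}\odot a^-_{ji},\ a^+_{ik}\odot a^+_{kj}\odot a^+_{ji}]$. The $[\mathcal{G}]$-consistency index is $I_{[\mathcal{G}]}(\tilde A)=\Big(\bigodot_{i<j<k}d_{[\mathcal{G}]}(\tilde a_{ijk},\tilde a_{ikj})\Big)^{(1/|T|)}$, where $T=\{(i,j,k):i<j<k\}$, $|T|=n(n-1)(n-2)/6$. *)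

(* Defs.v *)
From Stdlib Require Import Reals List Arith ClassicalEpsilon.
From Coquelicot Require Import Rbar.
Import ListNotations.
Open Scope R_scope.

Record real_cont_alo_group (inG : R -> Prop) (op : R -> R -> R) (e : R)
    (inv : R -> R) : Prop := {
  alo_open_interval : exists a b : Rbar, Rbar_lt a b /\
      forall x, inG x <-> (Rbar_lt a x /\ Rbar_lt x b);
  alo_closed : forall x y, inG x -> inG y -> inG (op x y);
  alo_assoc : forall x y z, inG x -> inG y -> inG z ->
      op (op x y) z = op x (op y z);
  alo_comm : forall x y, inG x -> inG y -> op x y = op y x;
  alo_e_in : inG e;
  alo_e_id : forall x, inG x -> op x e = x;
  alo_inv_in : forall x, inG x -> inG (inv x);
  alo_inv_r : forall x, inG x -> op x (inv x) = e;
  alo_monotone : forall a b c, inG a -> inG b -> inG c -> a <= b ->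
      op a c <= op b c;
  alo_continuous : forall x y, inG x -> inG y -> forall eps, 0 < eps ->
      exists delta, 0 < delta /\ forall x' y', inG x' -> inG y' ->
        Rabs (x' - x) < delta -> Rabs (y' - y) < delta ->
        Rabs (op x' y' - op x y) < eps
}.

Section AloDefs.
Variables (inG : R -> Prop) (op : R -> R -> R) (e : R) (inv : R -> R).

Definition gdiv (a b : R) : R := op a (inv b).
Definition gnorm (a : R) : R := Rmax a (inv a).
Definition gdist (a b : R) : R := gnorm (gdiv a b).

Fixpoint gpow (m : nat) (a : R) : R :=
  match m with O => e | S m' => op a (gpow m' a) end.

Definition groot (m : nat) (a : R) : R :=
  epsilon (inhabits 0) (fun x => inG x /\ gpow m x = a).

Definition ival (lo up : R) : R -> Prop := fun x => lo <= x <= up.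
Definition setmul (S T : R -> Prop) : R -> Prop :=
  fun z => exists x y, S x /\ T y /\ z = op x y.
Definition idist (lo1 up1 lo2 up2 : R) : R :=
  Rmax (gdist lo1 lo2) (gdist up1 up2).

(* An n x n IPCM is given by lower/upper entry functions alo, aup on
   indices 0..n-1. *)
Definition is_IPCM (n : nat) (alo aup : nat -> nat -> R) : Prop :=
  forall i j, (i < n)%nat -> (j < n)%nat ->
    inG (alo i j) /\ inG (aup i j) /\ alo i j <= aup i j.

Definition reciprocal (n : nat) (alo aup : nat -> nat -> R) : Prop :=
  forall i j, (i < n)%nat -> (j < n)%nat ->
    alo j i = inv (aup i j) /\ aup j i = inv (alo i j).

Definition consistent (n : nat) (alo aup : nat -> nat -> R) : Prop :=
  forall i j k, (i < n)%nat -> (j < n)%nat -> (k < n)%nat ->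
    forall z,
      setmul (setmul (ival (alo i j) (aup i j)) (ival (alo j k) (aup j k)))
             (ival (alo k i) (aup k i)) z <->
      setmul (setmul (ival (alo i k) (aup i k)) (ival (alo k j) (aup k j)))
             (ival (alo j i) (aup j i)) z.

Definition triples (n : nat) : list (nat * nat * nat) :=
  flat_map (fun i =>
    flat_map (fun j =>
      map (fun k => (i, j, k)) (seq (S j) (n - S j)))
      (seq (S i) (n - S i)))
    (seq 0 n).

Definition tri_dist (alo aup : nat -> nat -> R) (t : nat * nat * nat) : R :=
  let '(i, j, k) := t in
  idist (op (op (alo i j) (alo j k)) (alo k i))
        (op (op (aup i j) (aup j k)) (aup k i))
        (op (op (alo i k) (alo k j)) (alo j i))
        (op (op (aup i k) (aup k j)) (aup j i)).

(* I_[G](A) = (⊙_{i<j<k} d_[G](a_ijk, a_ikj))^(1/|T|), |T| = n(n-1)(n-2)/6 *)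
Definition consistency_index (n : nat) (alo aup : nat -> nat -> R) : R :=
  groot ((n * (n - 1) * (n - 2)) / 6)
        (fold_right (fun t acc => op (tri_dist alo aup t) acc) e (triples n)).

End AloDefs.

(* Main.v *)
Require Import Defs.
From Stdlib Require Import Reals Lra Lia List Arith ClassicalEpsilon.
From Coquelicot Require Import Rbar.
Import ListNotations.
Open Scope R_scope.

Section S.
Context {inG : R -> Prop} {op : R -> R -> R} {e : R} {inv : R -> R}
  (HG : real_cont_alo_group inG op e inv).

Lemma cl x y : inG x -> inG y -> inG (op x y). Proof. apply (alo_closed _ _ _ _ HG). Qed.
Lemma ein : inG e. Proof. apply (alo_e_in _ _ _ _ HG). Qed.
Lemma invin x : inG x -> inG (inv x). Proof. apply (alo_inv_in _ _ _ _ HG). Qed.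
Hint Resolve cl ein invin : grp.

Lemma idr x : inG x -> op x e = x. Proof. apply (alo_e_id _ _ _ _ HG). Qed.
Lemma idl x : inG x -> op e x = x.
Proof. intros; rewrite (alo_comm _ _ _ _ HG) by auto with grp; apply idr; auto. Qed.
Lemma invr x : inG x -> op x (inv x) = e. Proof. apply (alo_inv_r _ _ _ _ HG). Qed.
Lemma invl x : inG x -> op (inv x) x = e.
Proof. intros; rewrite (alo_comm _ _ _ _ HG) by auto with grp; apply invr; auto. Qed.
Lemma asc x y z : inG x -> inG y -> inG z -> op (op x y) z = op x (op y z).
Proof. apply (alo_assoc _ _ _ _ HG). Qed.
Lemma cmm x y : inG x -> inG y -> op x y = op y x. Proof. apply (alo_comm _ _ _ _ HG). Qed.

Lemma cancel_r a b c : inG a -> inG b -> inG c -> op a c = op b c -> a = b.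
Proof.
  intros Ha Hb Hc H.
  rewrite <- (idr a), <- (idr b) by auto.
  rewrite <- (invr c) by auto.
  rewrite <- !asc by auto with grp. now rewrite H.
Qed.

Lemma mono_l a b c : inG a -> inG b -> inG c -> a <= b -> op a c <= op b c.
Proof. apply (alo_monotone _ _ _ _ HG). Qed.
Lemma mono_r a b c : inG a -> inG b -> inG c -> a <= b -> op c a <= op c b.
Proof. intros; rewrite !(cmm c) by auto; apply mono_l; auto. Qed.
Lemma mono2 a b c d : inG a -> inG b -> inG c -> inG d -> a <= b -> c <= d -> op a c <= op b d.
Proof. intros; apply Rle_trans with (op b c); [apply mono_l|apply mono_r]; auto. Qed.
Lemma smono_l a b c : inG a -> inG b -> inG c -> a < b -> op a c < op b c.
Proof.
  intros Ha Hb Hc H. destruct (Rle_lt_or_eq_dec _ _ (mono_l a b c Ha Hb Hc (Rlt_le _ _ H))) as [h|h]; auto.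
  apply cancel_r in h; auto. lra.
Qed.
Lemma smono_r a b c : inG a -> inG b -> inG c -> a < b -> op c a < op c b.
Proof. intros; rewrite !(cmm c) by auto; apply smono_l; auto. Qed.

Lemma conv a b x : inG a -> inG b -> a <= x <= b -> inG x.
Proof.
  intros Ha Hb Hx. destruct (alo_open_interval _ _ _ _ HG) as (l & u & _ & H).
  apply H in Ha; apply H in Hb; apply H. destruct Ha as [Ha _]; destruct Hb as [_ Hb].
  split.
  - eapply Rbar_lt_le_trans; [exact Ha|]; simpl; lra.
  - eapply Rbar_le_lt_trans; [|exact Hb]; simpl; lra.
Qed.

Lemma inv_e : inv e = e.
Proof. rewrite <- (idl (inv e)) by auto with grp. apply invr; auto with grp. Qed.

Lemma gnorm_ge x : inG x -> e <= gnorm inv x.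
Proof.
  intros Hx; unfold gnorm. destruct (Rle_dec e x).
  - apply Rle_trans with x; auto; apply Rmax_l.
  - apply Rle_trans with (inv x); [|apply Rmax_r].
    rewrite <- (invr x) by auto. rewrite <- (idl (inv x)) at 2 by auto with grp.
    apply mono_l; auto with grp; lra.
Qed.

Lemma gnorm_e x : inG x -> gnorm inv x = e -> x = e.
Proof.
  intros Hx H; unfold gnorm in H.
  assert (h1 : x <= e) by (rewrite <- H; apply Rmax_l).
  assert (h2 : inv x <= e) by (rewrite <- H; apply Rmax_r).
  assert (h3 : e <= x).
  { rewrite <- (invl x) by auto. apply Rle_trans with (op e x).
    - apply mono_l; auto with grp.
    - rewrite idl by auto; lra. }
  lra.
Qed.

Lemma gdist_ge a b : inG a -> inG b -> e <= gdist op inv a b.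
Proof. intros; unfold gdist, gdiv; apply gnorm_ge; auto with grp. Qed.

Lemma gdist_e a b : inG a -> inG b -> gdist op inv a b = e <-> a = b.
Proof.
  intros Ha Hb; unfold gdist, gdiv; split; intro H.
  - apply gnorm_e in H; auto with grp. apply (cancel_r a b (inv b)); auto with grp.
    rewrite H, invr; auto.
  - subst. rewrite invr by auto. unfold gnorm. rewrite inv_e. apply Rmax_left; lra.
Qed.

Lemma idist_ge a b c d : inG a -> inG b -> inG c -> inG d -> e <= idist op inv a b c d.
Proof.
  intros; unfold idist. apply Rle_trans with (gdist op inv a c); [apply gdist_ge; auto|apply Rmax_l].
Qed.

Lemma idist_e a b c d : inG a -> inG b -> inG c -> inG d ->
  idist op inv a b c d = e <-> a = c /\ b = d.
Proof.
  intros Ha Hb Hc Hd; unfold idist; split; intro H.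
  - assert (gdist op inv a c <= e) by (rewrite <- H; apply Rmax_l).
    assert (gdist op inv b d <= e) by (rewrite <- H; apply Rmax_r).
    pose proof (gdist_ge a c Ha Hc) as G1; pose proof (gdist_ge b d Hb Hd) as G2.
    split; apply gdist_e; auto; lra.
  - destruct H; subst. rewrite (proj2 (gdist_e c c Hc Hc) eq_refl), (proj2 (gdist_e d d Hd Hd) eq_refl).
    apply Rmax_left; lra.
Qed.


Lemma gpow_in m x : inG x -> inG (gpow op e m x).
Proof. induction m; simpl; auto with grp. Qed.
Hint Resolve gpow_in : grp.

Lemma gpow_ee m : gpow op e m e = e.
Proof. induction m; simpl; auto. rewrite IHm; apply idr; auto with grp. Qed.

Lemma gpow_ge m x : inG x -> e <= x -> e <= gpow op e m x.
Proof.
  intros Hx H; induction m; simpl; [lra|].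
  apply Rle_trans with (op e (gpow op e m x)); [rewrite idl; auto with grp|].
  apply mono_l; auto with grp.
Qed.

Lemma gpow_ge_x m x : inG x -> e <= x -> x <= gpow op e (S m) x.
Proof.
  intros Hx H; simpl. rewrite <- (idr x) at 1 by auto.
  apply mono_r; auto with grp. apply gpow_ge; auto.
Qed.

Lemma gpow_lt m x : inG x -> x < e -> gpow op e (S m) x < e.
Proof.
  intros Hx H; induction m; simpl in *.
  - rewrite idr; auto.
  - apply Rlt_trans with (op e (gpow op e (S m) x)).
    + apply smono_l; auto with grp.
    + rewrite idl by auto with grp. auto.
Qed.

Lemma gpow_gt m x : inG x -> e < x -> e < gpow op e (S m) x.
Proof.
  intros Hx H; induction m; simpl in *.
  - rewrite idr; auto.
  - apply Rlt_trans with (op e (gpow op e (S m) x)).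
    + rewrite idl by auto with grp. auto.
    + apply smono_l; auto with grp.
Qed.

Lemma gpow_cont m z : inG z -> forall eps, 0 < eps -> exists d, 0 < d /\
  forall z', inG z' -> Rabs (z' - z) < d -> Rabs (gpow op e m z' - gpow op e m z) < eps.
Proof.
  intros Hz; induction m; intros eps Heps; simpl.
  - exists 1; split; [lra|]. intros. rewrite Rminus_diag, Rabs_R0; auto.
  - destruct (alo_continuous _ _ _ _ HG z (gpow op e m z) Hz (gpow_in m z Hz) eps Heps)
      as (d1 & Hd1 & H1).
    destruct (IHm d1 Hd1) as (d2 & Hd2 & H2).
    exists (Rmin d1 d2); split; [apply Rmin_glb_lt; auto|].
    intros z' Hz' Hd. apply H1; auto with grp.
    + apply Rlt_le_trans with (Rmin d1 d2); auto; apply Rmin_l.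
    + apply H2; auto. apply Rlt_le_trans with (Rmin d1 d2); auto; apply Rmin_r.
Qed.

Lemma root_exists m P : inG P -> e <= P -> exists r, inG r /\ gpow op e (S m) r = P.
Proof.
  intros HP HeP.
  set (c := fun x => Rmax e (Rmin P x)).
  assert (Hc : forall x, e <= c x <= P).
  { intro x; unfold c, Rmax, Rmin; repeat destruct Rle_dec; lra. }
  assert (Hcin : forall x, inG (c x)).
  { intro x; apply (conv e P); auto with grp. }
  assert (Hcl : forall x y, Rabs (c x - c y) <= Rabs (x - y)).
  { intros x y; unfold c, Rmax, Rmin; repeat destruct Rle_dec; unfold Rabs;
    repeat destruct Rcase_abs; lra. }
  set (g := fun x => gpow op e (S m) (c x) - P).
  assert (Hg : continuity g).
  { intro x0. unfold continuity_pt, continue_in, limit1_in, limit_in. simpl. unfold R_dist.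
    intros eps Heps.
    destruct (gpow_cont (S m) (c x0) (Hcin x0) eps Heps) as (d & Hd & H).
    exists d; split; [lra|]. intros x [_ Hx]. unfold g.
    replace (gpow op e (S m) (c x) - P - (gpow op e (S m) (c x0) - P))
      with (gpow op e (S m) (c x) - gpow op e (S m) (c x0)) by ring.
    apply H; auto. eapply Rle_lt_trans; [apply Hcl|auto]. }
  assert (ce : c e = e) by (unfold c, Rmax, Rmin; repeat destruct Rle_dec; lra).
  assert (cP : c P = P) by (unfold c, Rmax, Rmin; repeat destruct Rle_dec; lra).
  destruct (IVT_cor g e P Hg HeP) as (z & Hz & Hgz).
  { unfold g. rewrite ce, cP, gpow_ee.
    pose proof (gpow_ge_x m P HP HeP). nra. }
  exists (c z); split; auto. unfold g in Hgz; lra.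
Qed.

Lemma groot_spec m P : inG P -> e <= P ->
  inG (groot inG op e (S m) P) /\ gpow op e (S m) (groot inG op e (S m) P) = P.
Proof.
  intros HP HeP. unfold groot. apply epsilon_spec. apply root_exists; auto.
Qed.

Lemma groot_ge m P : inG P -> e <= P -> e <= groot inG op e (S m) P.
Proof.
  intros HP HeP. destruct (groot_spec m P HP HeP) as [Hin Hp].
  destruct (Rle_dec e (groot inG op e (S m) P)) as [h|h]; auto.
  pose proof (gpow_lt m _ Hin ltac:(lra)). lra.
Qed.

Lemma groot_e m P : inG P -> e <= P -> (groot inG op e (S m) P = e <-> P = e).
Proof.
  intros HP HeP. destruct (groot_spec m P HP HeP) as [Hin Hp]. split; intro H.
  - rewrite <- Hp, H. apply gpow_ee.
  - pose proof (groot_ge m P HP HeP).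
    destruct (Rle_lt_or_eq_dec _ _ H0) as [h|h]; auto.
    pose proof (gpow_gt m _ Hin h). lra.
Qed.

Lemma fold_prop {A} (f : A -> R) l :
  (forall t, In t l -> inG (f t) /\ e <= f t) ->
  let P := fold_right (fun t acc => op (f t) acc) e l in
  inG P /\ e <= P /\ (P = e <-> forall t, In t l -> f t = e).
Proof.
  cbv zeta; induction l as [|a l IH]; intros Hl; simpl.
  - split; [auto with grp|split; [lra|tauto]].
  - destruct (Hl a (or_introl eq_refl)) as [Ha Hea].
    destruct (IH (fun t Ht => Hl t (or_intror Ht))) as (Hin & Hge & Hiff).
    set (Q := fold_right (fun t acc => op (f t) acc) e l) in *.
    assert (h1 : f a <= op (f a) Q).
    { rewrite <- (idr (f a)) at 1 by auto. apply mono_r; auto with grp. }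
    assert (h2 : Q <= op (f a) Q).
    { rewrite <- (idl Q) at 1 by auto. apply mono_l; auto with grp. }
    split; [auto with grp|split; [lra|]]. split.
    + intros H t [<-|Ht]; [lra|]. apply Hiff; auto; lra.
    + intros H. rewrite H by auto. rewrite (proj2 Hiff) by auto. apply idr; auto with grp.
Qed.

Lemma canc1 a b : inG a -> inG b -> op (op a b) (inv b) = a.
Proof. intros; rewrite asc, invr, idr; auto with grp. Qed.
Lemma canc2 a b : inG a -> inG b -> op (inv a) (op a b) = b.
Proof. intros; rewrite <- asc, invl, idl; auto with grp. Qed.

Lemma setmul2 a1 b1 a2 b2 z : inG a1 -> inG b1 -> inG a2 -> inG b2 ->
  a1 <= b1 -> a2 <= b2 ->
  (setmul op (ival a1 b1) (ival a2 b2) z <-> ival (op a1 a2) (op b1 b2) z).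
Proof.
  intros H1 H2 H3 H4 h1 h2; unfold setmul, ival; split.
  - intros (x & y & Hx & Hy & ->).
    assert (inG x) by (apply (conv a1 b1); auto).
    assert (inG y) by (apply (conv a2 b2); auto).
    split; apply mono2; auto; lra.
  - intros Hz. assert (Gz : inG z) by (apply (conv (op a1 a2) (op b1 b2)); auto with grp).
    destruct (Rle_dec z (op b1 a2)) as [hz|hz].
    + exists (op z (inv a2)), a2. split; [|split; [lra|]].
      * rewrite <- (canc1 a1 a2) at 1 by auto. rewrite <- (canc1 b1 a2) by auto.
        split; apply mono_l; auto with grp; lra.
      * rewrite asc, invl, idr; auto with grp.
    + exists b1, (op (inv b1) z). split; [lra|split].
      * rewrite <- (canc2 b1 a2) at 1 by auto. rewrite <- (canc2 b1 b2) by auto.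
        split; apply mono_r; auto with grp; lra.
      * rewrite <- asc, invr, idl; auto with grp.
Qed.

Lemma setmul3 a1 b1 a2 b2 a3 b3 z : inG a1 -> inG b1 -> inG a2 -> inG b2 -> inG a3 -> inG b3 ->
  a1 <= b1 -> a2 <= b2 -> a3 <= b3 ->
  (setmul op (setmul op (ival a1 b1) (ival a2 b2)) (ival a3 b3) z <->
   ival (op (op a1 a2) a3) (op (op b1 b2) b3) z).
Proof.
  intros. rewrite <- setmul2 by (auto with grp; apply mono2; auto).
  unfold setmul at 1 3. split; intros (x & y & Hx & Hy & Hz); exists x, y; split; auto.
  - apply setmul2; auto.
  - apply setmul2; auto.
Qed.

Lemma ival_eq L1 U1 L2 U2 : L1 <= U1 -> L2 <= U2 ->
  ((forall z, ival L1 U1 z <-> ival L2 U2 z) <-> L1 = L2 /\ U1 = U2).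
Proof.
  unfold ival; intros h1 h2; split.
  - intros H. pose proof (proj1 (H L1)); pose proof (proj2 (H L2));
    pose proof (proj1 (H U1)); pose proof (proj2 (H U2)). 
    assert (L2 <= L1 <= U2) by (apply H0; lra).
    assert (L1 <= L2 <= U1) by (apply H1; lra).
    assert (L2 <= U1 <= U2) by (apply H2; lra).
    assert (L1 <= U2 <= U1) by (apply H3; lra).
    lra.
  - intros [-> ->]; tauto.
Qed.

Lemma cyc (a : nat -> nat -> R) i j k : inG (a i j) -> inG (a j k) -> inG (a k i) ->
  op (op (a i j) (a j k)) (a k i) = op (op (a j k) (a k i)) (a i j).
Proof. intros; rewrite (cmm (op (a j k) (a k i))), asc; auto with grp. Qed.


Lemma idist_in a b c d : inG a -> inG b -> inG c -> inG d -> inG (idist op inv a b c d).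
Proof.
  intros. unfold idist, gdist, gnorm, gdiv, Rmax; repeat destruct Rle_dec; auto with grp.
Qed.

Definition Lf (a : nat -> nat -> R) i j k := op (op (a i j) (a j k)) (a k i).
Definition E alo aup i j k := Lf alo i j k = Lf alo i k j /\ Lf aup i j k = Lf aup i k j.

Section M.
Variables (n : nat) (alo aup : nat -> nat -> R) (HA : is_IPCM inG n alo aup).
Lemma Hlo i j : (i < n)%nat -> (j < n)%nat -> inG (alo i j). Proof. intros; apply HA; auto. Qed.
Lemma Hup i j : (i < n)%nat -> (j < n)%nat -> inG (aup i j). Proof. intros; apply HA; auto. Qed.
Lemma Hle i j : (i < n)%nat -> (j < n)%nat -> alo i j <= aup i j. Proof. intros; apply HA; auto. Qed.

Lemma Ecyc i j k : (i < n)%nat -> (j < n)%nat -> (k < n)%nat -> E alo aup i j k -> E alo aup j k i.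
Proof.
  unfold E, Lf; intros hi hj hk [H1 H2].
  pose proof (Hlo i j hi hj); pose proof (Hlo j k hj hk); pose proof (Hlo k i hk hi).
  pose proof (Hlo j i hj hi); pose proof (Hlo k j hk hj); pose proof (Hlo i k hi hk).
  pose proof (Hup i j hi hj); pose proof (Hup j k hj hk); pose proof (Hup k i hk hi).
  pose proof (Hup j i hj hi); pose proof (Hup k j hk hj); pose proof (Hup i k hi hk).
  split.
  - rewrite <- (cyc alo i j k), H1 by auto. rewrite (cyc alo i k j), (cyc alo k j i) by auto. auto.
  - rewrite <- (cyc aup i j k), H2 by auto. rewrite (cyc aup i k j), (cyc aup k j i) by auto. auto.
Qed.

Lemma Eswp i j k : E alo aup i j k -> E alo aup i k j.
Proof. unfold E; intros [H1 H2]; auto. Qed.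

Lemma Edeg i k : (i < n)%nat -> (k < n)%nat -> E alo aup i i k.
Proof.
  unfold E, Lf; intros hi hk.
  pose proof (Hlo i i hi hi); pose proof (Hlo i k hi hk); pose proof (Hlo k i hk hi).
  pose proof (Hup i i hi hi); pose proof (Hup i k hi hk); pose proof (Hup k i hk hi).
  split.
  - rewrite (cyc alo i k i), (cyc alo k i i) by auto. auto.
  - rewrite (cyc aup i k i), (cyc aup k i i) by auto. auto.
Qed.

Lemma E_all : (forall i j k, (i < j)%nat -> (j < k)%nat -> (k < n)%nat -> E alo aup i j k) ->
  forall i j k, (i < n)%nat -> (j < n)%nat -> (k < n)%nat -> E alo aup i j k.
Proof.
  intros H i j k hi hj hk.
  destruct (lt_eq_lt_dec i j) as [[h1|h1]|h1];
  destruct (lt_eq_lt_dec j k) as [[h2|h2]|h2];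
  destruct (lt_eq_lt_dec i k) as [[h3|h3]|h3]; subst;
  first
  [ apply Edeg; lia
  | apply Eswp; apply Edeg; lia
  | eapply Ecyc; try lia; eapply Ecyc; try lia; apply Edeg; lia
  | apply H; lia
  | eapply Ecyc; try lia; apply H; lia
  | eapply Ecyc; try lia; eapply Ecyc; try lia; apply H; lia
  | apply Eswp; apply H; lia
  | apply Eswp; eapply Ecyc; try lia; apply H; lia
  | apply Eswp; eapply Ecyc; try lia; eapply Ecyc; try lia; apply H; lia ].
Qed.

Lemma Lle i j k : (i < n)%nat -> (j < n)%nat -> (k < n)%nat ->
  op (op (alo i j) (alo j k)) (alo k i) <= op (op (aup i j) (aup j k)) (aup k i).
Proof.
  intros. apply mono2; auto using Hlo, Hup, cl, Hle.
  apply mono2; auto using Hlo, Hup, Hle.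
Qed.

Lemma cons_iff : consistent op n alo aup <->
  forall i j k, (i < n)%nat -> (j < n)%nat -> (k < n)%nat -> E alo aup i j k.
Proof.
  unfold consistent, E, Lf.
  split; intros H i j k hi hj hk; [specialize (H i j k hi hj hk)|].
  - apply ival_eq.
    + apply Lle; auto.
    + apply Lle; auto.
    + intro z. rewrite <- !setmul3 by auto using Hlo, Hup, Hle. apply H.
  - intro z. rewrite !setmul3 by auto using Hlo, Hup, Hle. revert z. apply ival_eq.
    + apply Lle; auto.
    + apply Lle; auto.
    + apply H; auto.
Qed.
End M.
End S.

Lemma triples_in n i j k : In (i,j,k) (triples n) <-> (i<j /\ j<k /\ k<n)%nat.
Proof.
  unfold triples. rewrite in_flat_map. split.
  - intros (i' & Hi' & H). rewrite in_flat_map in H. destruct H as (j' & Hj' & H).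
    rewrite in_map_iff in H. destruct H as (k' & Heq & Hk'). injection Heq; intros; subst.
    rewrite in_seq in *. lia.
  - intros. exists i. split; [rewrite in_seq; lia|]. rewrite in_flat_map. exists j.
    split; [rewrite in_seq; lia|]. rewrite in_map_iff. exists k. split; auto. rewrite in_seq; lia.
Qed.

Theorem proposition14 (inG : R -> Prop) (op : R -> R -> R) (e : R) (inv : R -> R)
  (HG : real_cont_alo_group inG op e inv)
  (n : nat) (alo aup : nat -> nat -> R)
  (Hn : (3 <= n)%nat)
  (HA : is_IPCM inG n alo aup)
  (Hrec : reciprocal inv n alo aup) :
  e <= consistency_index inG op e inv n alo aup /\
  (consistency_index inG op e inv n alo aup = e <-> consistent op n alo aup).
Proof.
  unfold consistency_index.
  set (m := (n * (n - 1) * (n - 2) / 6)%nat).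
  assert (Hm : (1 <= m)%nat) by (apply Nat.div_le_lower_bound; [lia|nia]).
  destruct m as [|m'] eqn:Em; [lia|].
  assert (Hf : forall t, In t (triples n) -> inG (tri_dist op inv alo aup t) /\ e <= tri_dist op inv alo aup t).
  { intros [[i j] k] Ht. apply triples_in in Ht.
    assert (hi : (i < n)%nat) by lia. assert (hj : (j < n)%nat) by lia. assert (hk : (k < n)%nat) by lia.
    unfold tri_dist. split; [apply (idist_in HG)|apply (idist_ge HG)];
      repeat apply (cl HG); first [apply (Hlo n alo aup HA) | apply (Hup n alo aup HA)]; auto. }
  destruct (fold_prop HG (tri_dist op inv alo aup) (triples n) Hf) as (HPin & HPge & HPe).
  split; [apply (groot_ge HG); auto|].
  rewrite (groot_e HG) by auto. rewrite HPe, (cons_iff HG n alo aup HA).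
  split.
  - intros H. apply (E_all HG n alo aup HA). intros i j k h1 h2 h3.
    assert (hi : (i < n)%nat) by lia. assert (hj : (j < n)%nat) by lia. assert (hk : (k < n)%nat) by lia.
    specialize (H (i, j, k) (proj2 (triples_in n i j k) (conj h1 (conj h2 h3)))).
    unfold tri_dist in H. apply (idist_e HG) in H;
      repeat apply (cl HG); try first [apply (Hlo n alo aup HA) | apply (Hup n alo aup HA)]; auto.
  - intros H [[i j] k] Ht. apply triples_in in Ht.
    assert (hi : (i < n)%nat) by lia. assert (hj : (j < n)%nat) by lia. assert (hk : (k < n)%nat) by lia.
    unfold tri_dist. apply (idist_e HG);
      repeat apply (cl HG); try first [apply (Hlo n alo aup HA) | apply (Hup n alo aup HA)]; auto.
    apply H; auto.
Qed.
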